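(* Let $S^0$ be a left ample adequate semigroup with semilattice of idempotents $E^0$, and let $I=\bigcup_{x\in E^0}L_x$ be a left regular band with semilattice transversal $E^0$. Suppose there is a left action $S^0\times I\to I$, $(x,e)\mapsto x\ast e$ (so $(xy)\ast e=x\ast(y\ast e)$), distributive over the multiplication of $I$ (so $x\ast(ef)=(x\ast e)(x\ast f)$), satisfying: 1. for all $x,y\in S^0$, $x\ast y^+=(xy)^+$; 2. if $x,x_1,x_2\in S^0$, $e_1\in L_{x_1^+}$, $e_2\in L_{x_2^+}$ and $x^+(x\ast e_1)=x^+(x\ast e_2)$ and $xx_1=xx_2$, then $x^\ast\ast e_1=x^\ast\ast e_2$ and $x^\ast x_1=x^\ast x_2$. Define on $W=\{(e,x)\in I\times S^0: e\in L_{x^+}\}$ the multiplication $(e,x)(g,y)=(e(x\ast g),xy)$. Then $W$ is a left adequate, quasi-adequate semigroup with an admissible, left ample, adequate transversal isomorphic to $S^0$. If in addition 3. $x^+\ast e=x^+e$ for all $e\in I$, $x\in S^0$, then $I(W)\cong I$. Moreover every left adequate, quasi-adequate semigroup with a left ample, admissible adequate transversal can be constructed (up to isomorphism) in this way.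
   Context: For a semigroup $S$, $S^1$ is $S$ with an identity adjoined, $E(S)$ its idempotents, $\mathcal{L},\mathcal{R}$ Green's relations. $\mathcal{R}^\ast=\{(a,b):\forall x,y\in S^1,\ xa=ya\iff xb=yb\}$, $\mathcal{L}^\ast=\{(a,b):\forall x,y\in S^1,\ ax=ay\iff bx=by\}$. $S$ is abundant if each $\mathcal{R}^\ast$- and $\mathcal{L}^\ast$-class contains an idempotent; adequate if also idempotents commute (then $a^+$, $a^\ast$ are the unique idempotents $\mathcal{R}^\ast$-, resp. $\mathcal{L}^\ast$-related to $a$); left adequate if abundant and each $\mathcal{R}^\ast$-class contains a unique idempotent. An adequate semigroup $T$ is left ample if $ae=(ae)^+a$ for all $a\in T$, $e\in E(T)$. An abundant subsemigroup $U$ of abundant $S$ is a $\ast$-subsemigroup if $\mathcal{L}^\ast(U)=\mathcal{L}^\ast(S)\cap(U\times U)$, $\mathcal{R}^\ast(U)=\mathcal{R}^\ast(S)\cap(U\times U)$. An adequate $\ast$-subsemigroup $S^0$ of abundant $S$ is an adequate transversal if each $x\in S$ has a unique $\overline{x}\in S^0$ and idempotents $e,f$ (then unique, written $e_x,f_x$) with $x=e\overline{x}f$, $e\,\mathcal{L}\,\overline{x}^+$, $f\,\mathcal{R}\,\overline{x}^\ast$; $I(S)=\{e_x:x\in S\}$. Quasi-adequate: abundant with $E(S)$ a subsemigroup; the transversal is admissible if $\overline{xy}=\overline{x}\,\overline{y}$ for all $x,y$. A left regular band satisfies $xyx=xy$; $E^0$ is a semilattice transversal of $I$ if it is a subsemilattice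 of $I$ and each element of $I$ has exactly one inverse in $E^0$. For $x\in E^0$, $L_x$ is the $\mathcal{L}$-class of $x$ in $I$. *)

(* Defs.v *)
(* A semigroup is given by a carrier type T, a binary operation mul, and a
   carrier predicate P : T -> Prop (the subset on which we work; the whole
   type for an ordinary semigroup, a subset for subsemigroups / for W). *)

Set Implicit Arguments.

Definition allT {T : Type} (_ : T) : Prop := True.

(* S^1: adjoin an identity, modelled by option T (None = adjoined 1). *)
Definition opt_in {T : Type} (P : T -> Prop) (o : option T) : Prop :=
  match o with None => True | Some x => P x end.
Definition lmul1 {T : Type} (mul : T -> T -> T) (o : option T) (a : T) : T :=
  match o with None => a | Some x => mul x a end.
Definition rmul1 {T : Type} (mul : T -> T -> T) (a : T) (o : option T) : T :=
  match o with None => a | Some x => mul a x end.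

Definition closed_on {T : Type} (P : T -> Prop) (mul : T -> T -> T) : Prop :=
  forall a b, P a -> P b -> P (mul a b).
Definition assoc_on {T : Type} (P : T -> Prop) (mul : T -> T -> T) : Prop :=
  forall a b c, P a -> P b -> P c -> mul (mul a b) c = mul a (mul b c).

Definition idem {T : Type} (mul : T -> T -> T) (e : T) : Prop := mul e e = e.

Definition Lgreen {T : Type} (P : T -> Prop) (mul : T -> T -> T) (a b : T) : Prop :=
  exists x y, opt_in P x /\ opt_in P y /\ a = lmul1 mul x b /\ b = lmul1 mul y a.
Definition Rgreen {T : Type} (P : T -> Prop) (mul : T -> T -> T) (a b : T) : Prop :=
  exists x y, opt_in P x /\ opt_in P y /\ a = rmul1 mul b x /\ b = rmul1 mul a y.

Definition Rstar {T : Type} (P : T -> Prop) (mul : T -> T -> T) (a b : T) : Prop :=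
  forall x y, opt_in P x -> opt_in P y ->
    (lmul1 mul x a = lmul1 mul y a <-> lmul1 mul x b = lmul1 mul y b).
Definition Lstar {T : Type} (P : T -> Prop) (mul : T -> T -> T) (a b : T) : Prop :=
  forall x y, opt_in P x -> opt_in P y ->
    (rmul1 mul a x = rmul1 mul a y <-> rmul1 mul b x = rmul1 mul b y).

Definition abundant {T : Type} (P : T -> Prop) (mul : T -> T -> T) : Prop :=
  forall a, P a ->
    (exists e, P e /\ idem mul e /\ Rstar P mul a e) /\
    (exists f, P f /\ idem mul f /\ Lstar P mul a f).

Definition adequate {T : Type} (P : T -> Prop) (mul : T -> T -> T) : Prop :=
  abundant P mul /\
  forall e f, P e -> P f -> idem mul e -> idem mul f -> mul e f = mul f e.

Definition left_adequate {T : Type} (P : T -> Prop) (mul : T -> T -> T) : Prop :=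
  abundant P mul /\
  forall a e f, P a -> P e -> P f -> idem mul e -> idem mul f ->
    Rstar P mul a e -> Rstar P mul a f -> e = f.

Definition is_plus {T : Type} (P : T -> Prop) (mul : T -> T -> T) (a p : T) : Prop :=
  P p /\ idem mul p /\ Rstar P mul a p.
Definition is_star {T : Type} (P : T -> Prop) (mul : T -> T -> T) (a q : T) : Prop :=
  P q /\ idem mul q /\ Lstar P mul a q.

Definition left_ample {T : Type} (P : T -> Prop) (mul : T -> T -> T) : Prop :=
  adequate P mul /\
  forall a e p, P a -> P e -> idem mul e -> is_plus P mul (mul a e) p ->
    mul a e = mul p a.

Definition quasi_adequate {T : Type} (P : T -> Prop) (mul : T -> T -> T) : Prop :=
  abundant P mul /\
  forall e f, P e -> P f -> idem mul e -> idem mul f -> idem mul (mul e f).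

Definition star_subsemigroup {T : Type} (P : T -> Prop) (mul : T -> T -> T)
    (U : T -> Prop) : Prop :=
  (forall a, U a -> P a) /\ closed_on U mul /\ abundant U mul /\
  forall a b, U a -> U b ->
    (Lstar U mul a b <-> Lstar P mul a b) /\ (Rstar U mul a b <-> Rstar P mul a b).

Definition tdecomp {T : Type} (P : T -> Prop) (mul : T -> T -> T) (U : T -> Prop)
    (x xb e f : T) : Prop :=
  U xb /\ P e /\ P f /\ idem mul e /\ idem mul f /\ x = mul (mul e xb) f /\
  (exists p, is_plus U mul xb p /\ Lgreen P mul e p) /\
  (exists q, is_star U mul xb q /\ Rgreen P mul f q).

Definition is_bar {T : Type} (P : T -> Prop) (mul : T -> T -> T) (U : T -> Prop)
    (x xb : T) : Prop :=
  exists e f, tdecomp P mul U x xb e f.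

Definition adequate_transversal {T : Type} (P : T -> Prop) (mul : T -> T -> T)
    (U : T -> Prop) : Prop :=
  star_subsemigroup P mul U /\ adequate U mul /\
  forall x, P x -> exists xb, is_bar P mul U x xb /\
    forall xb', is_bar P mul U x xb' -> xb' = xb.

Definition admissible {T : Type} (P : T -> Prop) (mul : T -> T -> T)
    (U : T -> Prop) : Prop :=
  forall x y xb yb, P x -> P y -> is_bar P mul U x xb -> is_bar P mul U y yb ->
    is_bar P mul U (mul x y) (mul xb yb).

Definition I_set {T : Type} (P : T -> Prop) (mul : T -> T -> T) (U : T -> Prop)
    (e : T) : Prop :=
  exists x xb f, P x /\ tdecomp P mul U x xb e f.

Definition iso_onto {A B : Type} (mulA : A -> A -> A) (Q : B -> Prop)
    (mulB : B -> B -> B) : Prop :=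
  exists phi : A -> B,
    (forall a, Q (phi a)) /\
    (forall a a', phi a = phi a' -> a = a') /\
    (forall b, Q b -> exists a, phi a = b) /\
    (forall a a', phi (mulA a a') = mulB (phi a) (phi a')).

Definition left_regular_band {T : Type} (mul : T -> T -> T) : Prop :=
  assoc_on allT mul /\ (forall x, idem mul x) /\
  (forall x y, mul (mul x y) x = mul x y).

Definition inverse_of {T : Type} (mul : T -> T -> T) (a b : T) : Prop :=
  mul (mul a b) a = a /\ mul (mul b a) b = b.

(* Construction data: S^0 = (T0, mul0) left ample (adequate) with semilattice of
   idempotents E^0 = E(S^0), embedded in the left regular band I = (TI, mulI) via
   iota; act x e is x * e. *)
Definition construction_data (T0 : Type) (mul0 : T0 -> T0 -> T0)
    (TI : Type) (mulI : TI -> TI -> TI) (iota : T0 -> TI)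
    (act : T0 -> TI -> TI) : Prop :=
  assoc_on allT mul0 /\ left_ample allT mul0 /\
  left_regular_band mulI /\
  (forall e f, idem mul0 e -> idem mul0 f -> iota (mul0 e f) = mulI (iota e) (iota f)) /\
  (forall e f, idem mul0 e -> idem mul0 f -> iota e = iota f -> e = f) /\
  (forall a, exists e, idem mul0 e /\ inverse_of mulI a (iota e) /\
      forall e', idem mul0 e' -> inverse_of mulI a (iota e') -> e' = e) /\
  (forall a, exists e, idem mul0 e /\ Lgreen allT mulI a (iota e)) /\
  (forall x y e, act (mul0 x y) e = act x (act y e)) /\
  (forall x e f, act x (mulI e f) = mulI (act x e) (act x f)) /\
  (forall x y p q, is_plus allT mul0 y p -> is_plus allT mul0 (mul0 x y) q ->
      act x (iota p) = iota q) /\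
  (forall x x1 x2 e1 e2 p p1 p2 s,
      is_plus allT mul0 x p -> is_star allT mul0 x s ->
      is_plus allT mul0 x1 p1 -> is_plus allT mul0 x2 p2 ->
      Lgreen allT mulI e1 (iota p1) -> Lgreen allT mulI e2 (iota p2) ->
      mulI (iota p) (act x e1) = mulI (iota p) (act x e2) ->
      mul0 x x1 = mul0 x x2 ->
      act s e1 = act s e2 /\ mul0 s x1 = mul0 s x2).

Definition condition3 (T0 : Type) (mul0 : T0 -> T0 -> T0)
    (TI : Type) (mulI : TI -> TI -> TI) (iota : T0 -> TI)
    (act : T0 -> TI -> TI) : Prop :=
  forall e x p, is_plus allT mul0 x p -> act p e = mulI (iota p) e.

Definition Wpred (T0 : Type) (mul0 : T0 -> T0 -> T0)
    (TI : Type) (mulI : TI -> TI -> TI) (iota : T0 -> TI)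
    (w : TI * T0) : Prop :=
  exists p, is_plus allT mul0 (snd w) p /\ Lgreen allT mulI (fst w) (iota p).

Definition mulW (T0 : Type) (mul0 : T0 -> T0 -> T0)
    (TI : Type) (mulI : TI -> TI -> TI) (act : T0 -> TI -> TI)
    (w v : TI * T0) : TI * T0 :=
  (mulI (fst w) (act (snd w) (fst v)), mul0 (snd w) (snd v)).

(* Main.v *)
Require Import Defs.
From Stdlib Require Import ClassicalEpsilon ProofIrrelevance.
Set Implicit Arguments.

Section Gen.
Variable T : Type.
Variable P : T -> Prop.
Variable mul : T -> T -> T.

Lemma lmul1_assoc : assoc_on P mul -> forall u a b, opt_in P u -> P a -> P b ->
  lmul1 mul u (mul a b) = mul (lmul1 mul u a) b.
Proof. intros HA [x|] a b Hu Ha Hb; simpl in *; auto. symmetry; apply HA; auto. Qed.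

Lemma rmul1_assoc : assoc_on P mul -> forall u a b, opt_in P u -> P a -> P b ->
  rmul1 mul (mul a b) u = mul a (rmul1 mul b u).
Proof. intros HA [x|] a b Hu Ha Hb; simpl in *; auto. Qed.

Lemma lmul1_P : closed_on P mul -> forall u a, opt_in P u -> P a -> P (lmul1 mul u a).
Proof. intros HC [x|] a Hu Ha; simpl in *; auto. Qed.
Lemma rmul1_P : closed_on P mul -> forall u a, opt_in P u -> P a -> P (rmul1 mul a u).
Proof. intros HC [x|] a Hu Ha; simpl in *; auto. Qed.

Lemma Rstar_refl a : Rstar P mul a a.
Proof. intros x y _ _; tauto. Qed.
Lemma Rstar_sym a b : Rstar P mul a b -> Rstar P mul b a.
Proof. intros H x y Hx Hy; specialize (H x y Hx Hy); tauto. Qed.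
Lemma Rstar_trans a b c : Rstar P mul a b -> Rstar P mul b c -> Rstar P mul a c.
Proof. intros H1 H2 x y Hx Hy; specialize (H1 x y Hx Hy); specialize (H2 x y Hx Hy); tauto. Qed.
Lemma Lstar_refl a : Lstar P mul a a.
Proof. intros x y _ _; tauto. Qed.
Lemma Lstar_sym a b : Lstar P mul a b -> Lstar P mul b a.
Proof. intros H x y Hx Hy; specialize (H x y Hx Hy); tauto. Qed.
Lemma Lstar_trans a b c : Lstar P mul a b -> Lstar P mul b c -> Lstar P mul a c.
Proof. intros H1 H2 x y Hx Hy; specialize (H1 x y Hx Hy); specialize (H2 x y Hx Hy); tauto. Qed.

Lemma Rstar_left a e u : Rstar P mul a e -> P u -> mul u a = a -> mul u e = e.
Proof. intros H Hu E. exact (proj1 (H (Some u) None Hu I) E). Qed.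
Lemma Rstar_left' a e u : Rstar P mul a e -> P u -> mul u e = e -> mul u a = a.
Proof. intros H Hu E. exact (proj2 (H (Some u) None Hu I) E). Qed.
Lemma Rstar_idem a e : Rstar P mul a e -> P e -> idem mul e -> mul e a = a.
Proof. intros H He Ie. apply (Rstar_left' H He Ie). Qed.
Lemma Rstar_eq a b u v : Rstar P mul a b -> P u -> P v -> mul u a = mul v a -> mul u b = mul v b.
Proof. intros H Hu Hv E. exact (proj1 (H (Some u) (Some v) Hu Hv) E). Qed.

Lemma Lstar_right a e u : Lstar P mul a e -> P u -> mul a u = a -> mul e u = e.
Proof. intros H Hu E. exact (proj1 (H (Some u) None Hu I) E). Qed.
Lemma Lstar_right' a e u : Lstar P mul a e -> P u -> mul e u = e -> mul a u = a.
Proof. intros H Hu E. exact (proj2 (H (Some u) None Hu I) E). Qed.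
Lemma Lstar_idem a e : Lstar P mul a e -> P e -> idem mul e -> mul a e = a.
Proof. intros H He Ie. apply (Lstar_right' H He Ie). Qed.
Lemma Lstar_eq a b u v : Lstar P mul a b -> P u -> P v -> mul a u = mul a v -> mul b u = mul b v.
Proof. intros H Hu Hv E. exact (proj1 (H (Some u) (Some v) Hu Hv) E). Qed.

Lemma Rstar_idems e f : Rstar P mul e f -> P e -> P f -> idem mul e -> idem mul f ->
  mul f e = e /\ mul e f = f.
Proof. intros H He Hf Ie If; split.
  - apply (Rstar_idem H Hf If).
  - apply (Rstar_idem (Rstar_sym H) He Ie). Qed.
Lemma Lstar_idems e f : Lstar P mul e f -> P e -> P f -> idem mul e -> idem mul f ->
  mul e f = e /\ mul f e = f.
Proof. intros H He Hf Ie If; split.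
  - apply (Lstar_idem H Hf If).
  - apply (Lstar_idem (Lstar_sym H) He Ie). Qed.

Lemma R_Rstar e f : assoc_on P mul -> P e -> P f -> mul f e = e -> mul e f = f -> Rstar P mul e f.
Proof. intros HA He Hf E1 E2 x y Hx Hy; split; intro E.
  - rewrite <- E2, !(lmul1_assoc HA); auto; congruence.
  - rewrite <- E1, !(lmul1_assoc HA); auto; congruence. Qed.
Lemma L_Lstar e f : assoc_on P mul -> P e -> P f -> mul e f = e -> mul f e = f -> Lstar P mul e f.
Proof. intros HA He Hf E1 E2 x y Hx Hy; split; intro E.
  - rewrite <- E2, !(rmul1_assoc HA); auto; congruence.
  - rewrite <- E1, !(rmul1_assoc HA); auto; congruence. Qed.

Lemma Lgreen_idems a b : assoc_on P mul -> P a -> P b -> idem mul a -> idem mul b ->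
  Lgreen P mul a b -> mul a b = a /\ mul b a = b.
Proof. intros HA Ha Hb Ia Ib [x [y [Hx [Hy [E1 E2]]]]]; split.
  - destruct x as [x|]; simpl in *.
    + rewrite E1, HA; auto. rewrite Ib; auto.
    + rewrite <- E1; exact Ia.
  - destruct y as [y|]; simpl in *.
    + rewrite E2, HA; auto. rewrite Ia; auto.
    + rewrite <- E2; exact Ib.
Qed.
Lemma Rgreen_idems a b : assoc_on P mul -> P a -> P b -> idem mul a -> idem mul b ->
  Rgreen P mul a b -> mul b a = a /\ mul a b = b.
Proof. intros HA Ha Hb Ia Ib [x [y [Hx [Hy [E1 E2]]]]]; split.
  - destruct x as [x|]; simpl in *.
    + rewrite E1, <- HA; auto. rewrite Ib; auto.
    + rewrite <- E1; exact Ia.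
  - destruct y as [y|]; simpl in *.
    + rewrite E2, <- HA; auto. rewrite Ia; auto.
    + rewrite <- E2; exact Ib.
Qed.
Lemma L_Lgreen a b : P a -> P b -> mul a b = a -> mul b a = b -> Lgreen P mul a b.
Proof. intros Ha Hb E1 E2. exists (Some a), (Some b); simpl; auto. Qed.
Lemma R_Rgreen a b : P a -> P b -> mul b a = a -> mul a b = b -> Rgreen P mul a b.
Proof. intros Ha Hb E1 E2. exists (Some a), (Some b); simpl; auto. Qed.
Lemma plus_unique a p q : adequate P mul -> is_plus P mul a p -> is_plus P mul a q -> p = q.
Proof. intros [_ HC] [Pp [Ip Rp]] [Pq [Iq Rq]].
  destruct (Rstar_idems (Rstar_trans (Rstar_sym Rp) Rq) Pp Pq Ip Iq) as [E1 E2].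
  rewrite <- E1 at 1. rewrite (HC q p Pq Pp Iq Ip). exact E2. Qed.
Lemma star_unique a p q : adequate P mul -> is_star P mul a p -> is_star P mul a q -> p = q.
Proof. intros [_ HC] [Pp [Ip Rp]] [Pq [Iq Rq]].
  destruct (Lstar_idems (Lstar_trans (Lstar_sym Rp) Rq) Pp Pq Ip Iq) as [E1 E2].
  rewrite <- E1 at 1. rewrite (HC p q Pp Pq Ip Iq). exact E2. Qed.
End Gen.

Section Iso.
Variables (A B : Type) (mA : A -> A -> A) (Q : B -> Prop) (mB : B -> B -> B) (phi : A -> B).
Hypothesis HQ : forall a, Q (phi a).
Hypothesis Hinj : forall a a', phi a = phi a' -> a = a'.
Hypothesis Hsurj : forall b, Q b -> exists a, phi a = b.
Hypothesis Hhom : forall a a', phi (mA a a') = mB (phi a) (phi a').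

Lemma opt_lift u : opt_in Q u -> exists u', u = option_map phi u'.
Proof. destruct u as [b|]; simpl; intro H.
  - destruct (Hsurj H) as [a Ha]; exists (Some a); simpl; congruence.
  - exists None; reflexivity. Qed.
Lemma lmul1_tr u a : lmul1 mB (option_map phi u) (phi a) = phi (lmul1 mA u a).
Proof. destruct u; simpl; auto. Qed.
Lemma rmul1_tr u a : rmul1 mB (phi a) (option_map phi u) = phi (rmul1 mA a u).
Proof. destruct u; simpl; auto. Qed.
Lemma opt_map_in u : opt_in Q (option_map phi u).
Proof. destruct u; simpl; auto. Qed.

Lemma inj_iff a a' : phi a = phi a' <-> a = a'.
Proof. split; intro; subst; auto. Qed.

Lemma Rstar_tr a b : Rstar allT mA a b <-> Rstar Q mB (phi a) (phi b).
Proof. split; intros H x y Hx Hy.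
  - destruct (opt_lift _ Hx) as [x' ->]; destruct (opt_lift _ Hy) as [y' ->].
    rewrite !lmul1_tr, !inj_iff. apply H; destruct x'; destruct y'; simpl; exact I.
  - specialize (H (option_map phi x) (option_map phi y) (opt_map_in _) (opt_map_in _)).
    rewrite !lmul1_tr, !inj_iff in H. exact H. Qed.
Lemma Lstar_tr a b : Lstar allT mA a b <-> Lstar Q mB (phi a) (phi b).
Proof. split; intros H x y Hx Hy.
  - destruct (opt_lift _ Hx) as [x' ->]; destruct (opt_lift _ Hy) as [y' ->].
    rewrite !rmul1_tr, !inj_iff. apply H; destruct x'; destruct y'; simpl; exact I.
  - specialize (H (option_map phi x) (option_map phi y) (opt_map_in _) (opt_map_in _)).
    rewrite !rmul1_tr, !inj_iff in H. exact H. Qed.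
Lemma idem_tr a : idem mA a <-> idem mB (phi a).
Proof. unfold idem; rewrite <- Hhom; rewrite inj_iff; tauto. Qed.
Lemma plus_tr a p : is_plus allT mA a p <-> is_plus Q mB (phi a) (phi p).
Proof. unfold is_plus; rewrite idem_tr, Rstar_tr. split; intros [? [? ?]]; (split; [first [apply HQ | exact I] | split; auto]). Qed.
Lemma star_tr a p : is_star allT mA a p <-> is_star Q mB (phi a) (phi p).
Proof. unfold is_star; rewrite idem_tr, Lstar_tr. split; intros [? [? ?]]; (split; [first [apply HQ | exact I] | split; auto]). Qed.

Lemma abundant_tr : abundant allT mA <-> abundant Q mB.
Proof. split; intro H.
  - intros b Hb. destruct (Hsurj Hb) as [a <-]. destruct (H a I) as [[e [_ [Ie Re]]] [f [_ [If Lf]]]].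
    split; [exists (phi e) | exists (phi f)]; (split; [apply HQ|]).
    + rewrite <- idem_tr, <- Rstar_tr; auto.
    + rewrite <- idem_tr, <- Lstar_tr; auto.
  - intros a _. destruct (H (phi a) (HQ a)) as [[e [Qe [Ie Re]]] [f [Qf [If Lf]]]].
    destruct (Hsurj Qe) as [e' <-]; destruct (Hsurj Qf) as [f' <-].
    split; [exists e' | exists f']; (split; [exact I|]).
    + rewrite idem_tr, Rstar_tr; auto.
    + rewrite idem_tr, Lstar_tr; auto. Qed.
Lemma adequate_tr : adequate allT mA <-> adequate Q mB.
Proof. unfold adequate; rewrite abundant_tr; split; intros [H1 H2]; split; auto.
  - intros e f He Hf Ie If. destruct (Hsurj He) as [e' <-]; destruct (Hsurj Hf) as [f' <-].
    rewrite <- !Hhom; f_equal. rewrite <- idem_tr in Ie, If. apply H2; auto; exact I.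
  - intros e f _ _ Ie If. apply Hinj. rewrite !Hhom. rewrite idem_tr in Ie, If. apply H2; auto.
Qed.
Lemma left_ample_tr : left_ample allT mA <-> left_ample Q mB.
Proof. unfold left_ample; rewrite adequate_tr; split; intros [H1 H2]; split; auto.
  - intros a e p Ha He Ie Hp. destruct (Hsurj Ha) as [a' <-]; destruct (Hsurj He) as [e' <-].
    destruct Hp as [Qp Hp']. destruct (Hsurj Qp) as [p' <-].
    rewrite <- !Hhom; f_equal. rewrite <- idem_tr in Ie. apply H2; auto; try exact I.
    rewrite plus_tr, Hhom. split; auto.
  - intros a e p _ _ Ie Hp. apply Hinj. rewrite !Hhom. rewrite idem_tr in Ie.
    rewrite plus_tr, Hhom in Hp. apply H2; auto. Qed.
End Iso.

Unset Implicit Arguments.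

Section P1.
Variables (T0 : Type) (mul0 : T0 -> T0 -> T0) (TI : Type) (mulI : TI -> TI -> TI)
  (iota : T0 -> TI) (act : T0 -> TI -> TI).
Hypothesis A0 : assoc_on allT mul0.
Hypothesis LA : left_ample allT mul0.
Hypothesis AI : assoc_on allT mulI.
Hypothesis II : forall x, idem mulI x.
Hypothesis LRB : forall x y, mulI (mulI x y) x = mulI x y.
Hypothesis Hio : forall e f, idem mul0 e -> idem mul0 f -> iota (mul0 e f) = mulI (iota e) (iota f).
Hypothesis Hinj : forall e f, idem mul0 e -> idem mul0 f -> iota e = iota f -> e = f.
Hypothesis HLu : forall a, exists e, idem mul0 e /\ Lgreen allT mulI a (iota e).
Hypothesis Hact : forall x y e, act (mul0 x y) e = act x (act y e).
Hypothesis Hdist : forall x e f, act x (mulI e f) = mulI (act x e) (act x f).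
Hypothesis C1 : forall x y p q, is_plus allT mul0 y p -> is_plus allT mul0 (mul0 x y) q ->
      act x (iota p) = iota q.
Hypothesis C2 : forall x x1 x2 e1 e2 p p1 p2 s,
      is_plus allT mul0 x p -> is_star allT mul0 x s ->
      is_plus allT mul0 x1 p1 -> is_plus allT mul0 x2 p2 ->
      Lgreen allT mulI e1 (iota p1) -> Lgreen allT mulI e2 (iota p2) ->
      mulI (iota p) (act x e1) = mulI (iota p) (act x e2) ->
      mul0 x x1 = mul0 x x2 ->
      act s e1 = act s e2 /\ mul0 s x1 = mul0 s x2.

Local Notation "x ** y" := (mul0 x y) (at level 40, left associativity).
Local Notation "x <.> y" := (mulI x y) (at level 40, left associativity).

Lemma A0' x y z : x ** y ** z = x ** (y ** z).
Proof. apply A0; exact I. Qed.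
Lemma AI' x y z : x <.> y <.> z = x <.> (y <.> z).
Proof. apply AI; exact I. Qed.

Definition ADQ := proj1 LA.
Definition ABD := proj1 ADQ.
Definition pl (x : T0) : T0 := proj1_sig (constructive_indefinite_description _ (proj1 (ABD x I))).
Definition st (x : T0) : T0 := proj1_sig (constructive_indefinite_description _ (proj2 (ABD x I))).
Lemma pl_spec x : is_plus allT mul0 x (pl x).
Proof. unfold pl; destruct (constructive_indefinite_description _ _) as [p Hp]; exact Hp. Qed.
Lemma st_spec x : is_star allT mul0 x (st x).
Proof. unfold st; destruct (constructive_indefinite_description _ _) as [p Hp]; exact Hp. Qed.
Lemma pl_idem x : idem mul0 (pl x). Proof. apply pl_spec. Qed.
Lemma st_idem x : idem mul0 (st x). Proof. apply st_spec. Qed.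
Lemma pl_R x : Rstar allT mul0 x (pl x). Proof. apply pl_spec. Qed.
Lemma st_L x : Lstar allT mul0 x (st x). Proof. apply st_spec. Qed.
Lemma pl_l x : pl x ** x = x.
Proof. apply (Rstar_idem (pl_R x) I (pl_idem x)). Qed.
Lemma st_r x : x ** st x = x.
Proof. apply (Lstar_idem (st_L x) I (st_idem x)). Qed.
Lemma comm0 e f : idem mul0 e -> idem mul0 f -> e ** f = f ** e.
Proof. intros; apply (proj2 ADQ); auto; exact I. Qed.
Lemma idem_mul0 e f : idem mul0 e -> idem mul0 f -> idem mul0 (e ** f).
Proof. intros Ie If; unfold idem.
  replace (e ** f ** (e ** f)) with (e ** (f ** e) ** f) by (rewrite !A0'; auto).
  rewrite <- (comm0 e f Ie If). replace (e ** (e ** f) ** f) with ((e ** e) ** (f ** f)) by (rewrite !A0'; auto).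
  rewrite Ie, If; auto. Qed.
Lemma pl_uniq x p : is_plus allT mul0 x p -> p = pl x.
Proof. intros [_ [Ip Rp]].
  destruct (Rstar_idems (Rstar_trans (Rstar_sym Rp) (pl_R x)) I I Ip (pl_idem x)) as [E1 E2].
  rewrite <- E1, comm0; auto; apply pl_idem. Qed.
Lemma st_uniq x p : is_star allT mul0 x p -> p = st x.
Proof. intros [_ [Ip Rp]].
  destruct (Lstar_idems (Lstar_trans (Lstar_sym Rp) (st_L x)) I I Ip (st_idem x)) as [E1 E2].
  rewrite <- E1, comm0; auto; apply st_idem. Qed.
Lemma pl_idemp e : idem mul0 e -> pl e = e.
Proof. intro Ie; symmetry; apply pl_uniq. split; [exact I|split; auto]. apply Rstar_refl. Qed.
Lemma st_idemp e : idem mul0 e -> st e = e.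
Proof. intro Ie; symmetry; apply st_uniq. split; [exact I|split; auto]. apply Lstar_refl. Qed.
Lemma pl_mul x y : pl x ** pl (x ** y) = pl (x ** y).
Proof. apply (Rstar_left (pl x) (pl_R (x ** y)) I). rewrite <- A0', pl_l; auto. Qed.
Lemma pl_mul' x y : pl (x ** y) ** pl x = pl (x ** y).
Proof. rewrite comm0; [apply pl_mul | apply pl_idem | apply pl_idem]. Qed.

Lemma Lg_iff a b : Lgreen allT mulI a b <-> a <.> b = a /\ b <.> a = b.
Proof. split.
  - intro H; apply (Lgreen_idems AI); auto; exact I.
  - intros [E1 E2]; apply L_Lgreen; auto; exact I. Qed.
Lemma L_same a b c : a <.> c = a -> c <.> b = c -> a <.> b = a.
Proof. intros E1 E2. rewrite <- E1, AI', E2; auto. Qed.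

Definition Pl x := iota (pl x).
Lemma Pl_idem x : Pl x <.> Pl x = Pl x. Proof. apply II. Qed.
Lemma C1' x y : act x (Pl y) = Pl (x ** y).
Proof. apply (C1 x y); apply pl_spec. Qed.
Lemma Pl_mul' x y : Pl (x ** y) <.> Pl x = Pl (x ** y).
Proof. unfold Pl; rewrite <- Hio by apply pl_idem. rewrite pl_mul'; auto. Qed.
Lemma Pl_mul x y : Pl x <.> Pl (x ** y) = Pl (x ** y).
Proof. unfold Pl; rewrite <- Hio by apply pl_idem. rewrite pl_mul; auto. Qed.

Definition LL a x := a <.> Pl x = a /\ Pl x <.> a = Pl x.

Lemma act_LL x y g : LL g y -> LL (act x g) (x ** y).
Proof. intros [E1 E2]; split.
  - rewrite <- C1', <- Hdist, E1; auto.
  - rewrite <- C1', <- Hdist, E2; auto. Qed.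

Definition W := Wpred mul0 mulI iota.
Definition mW := mulW mul0 mulI act.

Lemma W_iff w : W w <-> LL (fst w) (snd w).
Proof. unfold W, Wpred, LL, Pl. split.
  - intros [p [Hp HL]]. rewrite <- (pl_uniq _ _ Hp). apply Lg_iff; auto.
  - intro H; exists (pl (snd w)); split; [apply pl_spec | apply Lg_iff; auto]. Qed.

Lemma LL_mul e x g y : LL e x -> LL g y -> LL (e <.> act x g) (x ** y).
Proof. intros [E1 E2] Hg. destruct (act_LL x y g Hg) as [F1 F2]. split.
  - rewrite AI', F1; auto.
  - transitivity (Pl (x ** y) <.> Pl x <.> e <.> act x g).
    + rewrite Pl_mul', AI'; auto.
    + rewrite (AI' (Pl (x ** y)) (Pl x) e), E2, Pl_mul'; auto. Qed.

Lemma W_closed : closed_on W mW.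
Proof. intros [e x] [g y] H1 H2. apply W_iff in H1; apply W_iff in H2. apply W_iff; simpl.
  apply LL_mul; auto. Qed.

Lemma W_assoc : assoc_on W mW.
Proof. intros [e x] [g y] [h z] _ _ _. unfold mW, mulW; simpl. f_equal.
  - rewrite Hact, Hdist, AI'; auto.
  - apply A0'. Qed.

Lemma opt_allT {A : Type} (o : option A) : opt_in allT o.
Proof. destruct o; exact I. Qed.
Lemma pair_eq_iff {A B : Type} (a a' : A) (b b' : B) : (a, b) = (a', b') <-> a = a' /\ b = b'.
Proof. split; [intro H; inversion H; auto | intros [-> ->]; auto]. Qed.
Lemma mW_pair e x g y : mW (e, x) (g, y) = (e <.> act x g, x ** y).
Proof. reflexivity. Qed.

Lemma LL_self a x : LL a x -> LL (act x a) x -> idem mul0 x -> a <.> act x a = a.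
Proof. intros [E1 E2] [F1 F2] _. apply (L_same _ _ (Pl x)); auto. Qed.

Lemma W_idem e x : W (e, x) -> (idem mW (e, x) <-> idem mul0 x).
Proof. intro H; apply W_iff in H; simpl in H. unfold idem; rewrite mW_pair, pair_eq_iff. split.
  - tauto.
  - intro Ix; split; auto. pose proof (act_LL x x e H) as H'. unfold idem in Ix; rewrite Ix in H'.
    destruct H as [E1 E2]; destruct H' as [F1 F2]. apply (L_same _ _ (Pl x)); auto. Qed.

Definition Fst (u : option (TI * T0)) (e : TI) : TI :=
  match u with None => e | Some (a, y) => a <.> act y e end.
Lemma lm_pair u e z : lmul1 mW u (e, z) = (Fst u e, lmul1 mul0 (option_map snd u) z).
Proof. destruct u as [[a y]|]; reflexivity. Qed.

Lemma W_R e x : Rstar W mW (e, x) (e, pl x).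
Proof. intros u v _ _. rewrite !lm_pair, !pair_eq_iff.
  pose proof (pl_R x (option_map snd u) (option_map snd v) (opt_allT _) (opt_allT _)). tauto. Qed.

Lemma Wpl e x : W (e, x) -> W (e, pl x).
Proof. intro H; apply W_iff in H; apply W_iff; simpl in *. unfold LL, Pl in *. rewrite pl_idemp by apply pl_idem. auto. Qed.

Definition Is x := iota (st x).
Lemma Pl_st x : Pl (st x) = Is x.
Proof. unfold Pl, Is; rewrite pl_idemp by apply st_idem; auto. Qed.
Lemma act_x_Is x : act x (Is x) = Pl x.
Proof. rewrite <- Pl_st, C1', st_r; auto. Qed.
Lemma act_s_Is x : act (st x) (Is x) = Is x.
Proof. rewrite <- Pl_st, C1'. rewrite (st_idem x). auto. Qed.
Lemma W_Is x : W (Is x, st x).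
Proof. apply W_iff; simpl; unfold LL; rewrite Pl_st; split; apply II. Qed.

Lemma Kfw x g y h z : LL g y -> LL h z -> x ** y = x ** z ->
  Pl x <.> act x g = Pl x <.> act x h -> act (st x) g = act (st x) h.
Proof. intros Hg Hh Exy E.
  refine (proj1 (C2 x y z g h (pl x) (pl y) (pl z) (st x) (pl_spec x) (st_spec x) (pl_spec y) (pl_spec z) _ _ E Exy)).
  - apply Lg_iff; exact Hg.
  - apply Lg_iff; exact Hh. Qed.
Lemma Kbw x g h : Is x <.> act (st x) g = Is x <.> act (st x) h ->
  Pl x <.> act x g = Pl x <.> act x h.
Proof. intro E. apply (f_equal (act x)) in E. rewrite !Hdist, act_x_Is, <- !Hact, st_r in E. exact E. Qed.

Lemma ePl e x : LL e x -> forall k, e <.> k = e <.> (Pl x <.> k).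
Proof. intros [E1 E2] k. rewrite <- AI', E1; auto. Qed.
Lemma Ple e x : LL e x -> forall k, Pl x <.> k = Pl x <.> (e <.> k).
Proof. intros [E1 E2] k. rewrite <- AI', E2; auto. Qed.

Lemma Lcase e x h z : LL e x -> LL h z ->
  ((e, x) = mW (e, x) (h, z) <-> (Is x, st x) = mW (Is x, st x) (h, z)).
Proof. intros He Hh. rewrite !mW_pair, !pair_eq_iff.
  pose proof (st_L x None (Some z) I I) as HL; simpl in HL.
  assert (LIs : LL (Is x) (st x)) by (unfold LL; rewrite Pl_st; split; apply II).
  split; intros [E1 E2].
  - split; [|tauto].
    assert (HH : act (st x) (Is x) = act (st x) h).
    { apply (Kfw x (Is x) (st x) h z LIs Hh); [rewrite st_r; auto|].
      rewrite act_x_Is, II, (Ple e x He (act x h)), <- E1. destruct He as [_ F]; auto. }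
    rewrite <- HH, act_s_Is, II; auto.
  - split; [|tauto].
    assert (HH : Pl x <.> act x (Is x) = Pl x <.> act x h).
    { apply Kbw. rewrite <- E1, act_s_Is, II; auto. }
    rewrite act_x_Is, II in HH. rewrite (ePl e x He), <- HH. destruct He as [F _]; auto. Qed.

Lemma W_L e x : W (e, x) -> Lstar W mW (e, x) (Is x, st x).
Proof. intros He u v Hu Hv. apply W_iff in He; simpl in He.
  destruct u as [[g y]|]; destruct v as [[h z]|]; simpl in *.
  - apply W_iff in Hu; apply W_iff in Hv; simpl in *.
    rewrite !mW_pair, !pair_eq_iff.
    pose proof (st_L x (Some y) (Some z) I I) as HL; simpl in HL.
    split; intros [E1 E2].
    + assert (E3 : x ** y = x ** z) by exact E2.
      split; [|tauto]. f_equal. apply (Kfw x g y h z Hu Hv E3).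
      rewrite (Ple e x He (act x g)), (Ple e x He (act x h)), E1; auto.
    + assert (E3 : x ** y = x ** z) by tauto. split; auto.
      rewrite (ePl e x He (act x g)), (ePl e x He (act x h)). f_equal. apply Kbw; auto.
  - apply W_iff in Hu; simpl in Hu. pose proof (Lcase e x g y He Hu). split; intro E; symmetry; apply H; symmetry; auto.
  - apply W_iff in Hv; simpl in Hv. apply (Lcase e x h z He Hv).
  - tauto. Qed.

Lemma W_abundant : abundant W mW.
Proof. intros [e x] He. split.
  - exists (e, pl x). split; [apply Wpl; auto|split; [apply W_idem; [apply Wpl; auto| apply pl_idem]| apply W_R]].
  - exists (Is x, st x). split; [apply W_Is|split; [apply W_idem; [apply W_Is| apply st_idem]| apply W_L; auto]]. Qed.

Lemma W_idem_snd w : W w -> idem mW w -> idem mul0 (snd w).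
Proof. destruct w as [e x]; intros H I1; apply (W_idem e x H); auto. Qed.

Lemma W_ladeq : left_adequate W mW.
Proof. split; [apply W_abundant|].
  intros a [e1 x1] [f1 z1] Ha He Hf Ie If Re Rf.
  pose proof (W_idem_snd _ He Ie) as Ix; pose proof (W_idem_snd _ Hf If) as Iz; simpl in *.
  destruct (Rstar_idems (Rstar_trans (Rstar_sym Re) Rf) He Hf Ie If) as [E1 E2].
  rewrite mW_pair, pair_eq_iff in E1, E2. destruct E1 as [E1 E1']; destruct E2 as [E2 E2'].
  assert (x1 = z1) by (rewrite <- E1', comm0, E2'; auto). subst z1.
  apply W_iff in He; apply W_iff in Hf; simpl in *.
  pose proof (act_LL x1 x1 e1 He) as H'. rewrite Ix in H'.
  f_equal. rewrite <- E1. destruct Hf as [F1 F2]; destruct H' as [G1 G2].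
  apply (L_same _ _ (Pl x1)); auto. Qed.

Lemma W_quasi : quasi_adequate W mW.
Proof. split; [apply W_abundant|]. intros [e x] [f z] He Hf Ie If.
  pose proof (W_idem_snd _ He Ie); pose proof (W_idem_snd _ Hf If); simpl in *.
  rewrite mW_pair. apply W_idem.
  - rewrite <- mW_pair; apply W_closed; auto.
  - apply idem_mul0; auto. Qed.

Definition U (w : TI * T0) : Prop := fst w = Pl (snd w).
Definition phi (x : T0) : TI * T0 := (Pl x, x).
Lemma phi_U x : U (phi x). Proof. reflexivity. Qed.
Lemma phi_W x : W (phi x). Proof. apply W_iff; simpl; split; apply II. Qed.
Lemma phi_inj x y : phi x = phi y -> x = y. Proof. intro H; inversion H; auto. Qed.
Lemma phi_surj w : U w -> exists x, phi x = w.
Proof. destruct w as [e x]; unfold U; simpl; intro H; exists x; unfold phi; rewrite H; auto. Qed.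
Lemma phi_hom x y : phi (x ** y) = mW (phi x) (phi y).
Proof. unfold phi; rewrite mW_pair, C1', Pl_mul; auto. Qed.
Lemma U_W w : U w -> W w.
Proof. intro H; destruct (phi_surj w H) as [x <-]; apply phi_W. Qed.
Lemma U_closed : closed_on U mW.
Proof. intros a b Ha Hb. destruct (phi_surj a Ha) as [x <-]; destruct (phi_surj b Hb) as [y <-].
  rewrite <- phi_hom; apply phi_U. Qed.

Definition RstU := Rstar_tr mul0 U mW phi phi_U phi_inj phi_surj phi_hom.
Definition LstU := Lstar_tr mul0 U mW phi phi_U phi_inj phi_surj phi_hom.
Definition plU := plus_tr mul0 U mW phi phi_U phi_inj phi_surj phi_hom.
Definition stU := star_tr mul0 U mW phi phi_U phi_inj phi_surj phi_hom.

Lemma U_adequate : adequate U mW.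
Proof. apply (adequate_tr mul0 U mW phi phi_U phi_inj phi_surj phi_hom). exact ADQ. Qed.
Lemma U_lample : left_ample U mW.
Proof. apply (left_ample_tr mul0 U mW phi phi_U phi_inj phi_surj phi_hom). exact LA. Qed.

Lemma phi_pl x : phi (pl x) = (Pl x, pl x).
Proof. unfold phi, Pl; rewrite pl_idemp by apply pl_idem; auto. Qed.
Lemma phi_st x : phi (st x) = (Is x, st x).
Proof. unfold phi; rewrite Pl_st; auto. Qed.

Lemma S0_L x y : Lstar allT mul0 x y <-> st x = st y.
Proof. split.
  - intro H. destruct (Lstar_idems (Lstar_trans (Lstar_trans (Lstar_sym (st_L x)) H) (st_L y)) I I (st_idem x) (st_idem y)) as [E1 E2].
    rewrite <- E1, comm0, E2; auto; apply st_idem.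
  - intro E. apply (Lstar_trans (st_L x)). rewrite E. apply Lstar_sym, st_L. Qed.
Lemma S0_R x y : Rstar allT mul0 x y <-> pl x = pl y.
Proof. split.
  - intro H. destruct (Rstar_idems (Rstar_trans (Rstar_trans (Rstar_sym (pl_R x)) H) (pl_R y)) I I (pl_idem x) (pl_idem y)) as [E1 E2].
    rewrite <- E2, comm0, E1; auto; apply pl_idem.
  - intro E. apply (Rstar_trans (pl_R x)). rewrite E. apply Rstar_sym, pl_R. Qed.

Lemma W_Lx x : Lstar W mW (phi x) (phi (st x)).
Proof. rewrite phi_st. apply W_L. apply phi_W. Qed.
Lemma W_Rx x : Rstar W mW (phi x) (phi (pl x)).
Proof. rewrite phi_pl. apply W_R. Qed.

Lemma W_L_iff x y : Lstar W mW (phi x) (phi y) <-> st x = st y.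
Proof. split.
  - intro H. assert (H' := Lstar_trans (Lstar_trans (Lstar_sym (W_Lx x)) H) (W_Lx y)).
    destruct (Lstar_idems H' (phi_W _) (phi_W _)) as [E1 E2];
      try (apply W_idem; [apply phi_W | apply st_idem]).
    rewrite <- phi_hom in E1, E2. apply phi_inj in E1; apply phi_inj in E2.
    rewrite <- E1, comm0, E2; auto; apply st_idem.
  - intro E. apply (Lstar_trans (W_Lx x)). rewrite E. apply Lstar_sym, W_Lx. Qed.
Lemma W_R_iff x y : Rstar W mW (phi x) (phi y) <-> pl x = pl y.
Proof. split.
  - intro H. assert (H' := Rstar_trans (Rstar_trans (Rstar_sym (W_Rx x)) H) (W_Rx y)).
    destruct (Rstar_idems H' (phi_W _) (phi_W _)) as [E1 E2];
      try (apply W_idem; [apply phi_W | apply pl_idem]).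
    rewrite <- phi_hom in E1, E2. apply phi_inj in E1; apply phi_inj in E2.
    rewrite <- E2, comm0, E1; auto; apply pl_idem.
  - intro E. apply (Rstar_trans (W_Rx x)). rewrite E. apply Rstar_sym, W_Rx. Qed.

Lemma U_star : star_subsemigroup W mW U.
Proof. split; [exact U_W|]. split; [exact U_closed|]. split; [apply U_adequate|].
  intros a b Ha Hb. destruct (phi_surj a Ha) as [x <-]; destruct (phi_surj b Hb) as [y <-].
  rewrite <- LstU, <- RstU, S0_L, S0_R, W_L_iff, W_R_iff. tauto. Qed.

Lemma SameL a b f : idem mul0 f -> LL a f -> LL b f -> Lgreen W mW (a, f) (b, f).
Proof. intros If Ha Hb.
  assert (K : forall a b, LL a f -> LL b f -> (a, f) = mW (a, f) (b, f)).
  { intros a' b' Ha' Hb'. rewrite mW_pair. pose proof (act_LL f f b' Hb') as H'. rewrite If in H'.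
    f_equal; [|symmetry; exact If]. destruct Ha' as [E1 E2]; destruct H' as [F1 F2].
    symmetry; apply (L_same _ _ (Pl f)); auto. }
  exists (Some (a, f)), (Some (b, f)); simpl. repeat split; try (apply W_iff; auto); auto. Qed.

Lemma LLPl x : LL (Pl x) (pl x).
Proof. unfold LL, Pl; rewrite (pl_idemp (pl x) (pl_idem x)); split; apply II. Qed.

Lemma bar_intro e x : W (e, x) -> is_bar W mW U (e, x) (phi x).
Proof. intro He. assert (He' := He). apply W_iff in He'; simpl in He'.
  exists (e, pl x), (phi (st x)). unfold tdecomp.
  split; [apply phi_U|]. split; [apply Wpl; auto|]. split; [apply phi_W|].
  split; [apply W_idem; [apply Wpl; auto | apply pl_idem]|].
  split; [apply W_idem; [apply phi_W | apply st_idem]|].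
  split; [|split].
  - unfold phi. rewrite !mW_pair, C1', C1', pl_l, st_r. destruct He' as [E1 E2]. rewrite E1, E1; auto.
  - exists (phi (pl x)). split; [apply plU, pl_spec|]. rewrite phi_pl.
    apply SameL; [apply pl_idem | | ].
    + unfold LL, Pl in *. rewrite (pl_idemp (pl x) (pl_idem x)). exact He'.
    + unfold LL, Pl. rewrite (pl_idemp (pl x) (pl_idem x)). split; apply II.
  - exists (phi (st x)). split; [apply stU, st_spec|]. exists None, None; simpl; auto. Qed.

Lemma bar_elim w xb : W w -> is_bar W mW U w xb -> xb = phi (snd w).
Proof. intros Hw [[e z] [[f t] [HU [HE [HF [IE [IF [Ew [[p [Hp Lp]] [q [Hq Rq]]]]]]]]]]].
  destruct (phi_surj _ HU) as [y <-].
  destruct Hp as [Up Hp']. destruct (phi_surj _ Up) as [p' <-].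
  assert (Hp2 : is_plus U mW (phi y) (phi p')) by (split; auto).
  apply plU in Hp2. apply pl_uniq in Hp2. subst p'.
  destruct Hq as [Uq Hq']. destruct (phi_surj _ Uq) as [q' <-].
  assert (Hq2 : is_star U mW (phi y) (phi q')) by (split; auto).
  apply stU in Hq2. apply st_uniq in Hq2. subst q'.
  pose proof (W_idem_snd _ HE IE) as Iz; pose proof (W_idem_snd _ HF IF) as It; simpl in *.
  destruct (Lgreen_idems W_assoc HE (phi_W _) IE (proj2 (W_idem _ _ (phi_W _)) (pl_idem y)) Lp) as [L1 L2].
  destruct (Rgreen_idems W_assoc HF (phi_W _) IF (proj2 (W_idem _ _ (phi_W _)) (st_idem y)) Rq) as [R1 R2].
  unfold phi in L1, L2, R1, R2. rewrite mW_pair, pair_eq_iff in L1, L2, R1, R2.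
  assert (z = pl y) by (rewrite <- (proj2 L1), comm0, (proj2 L2); auto; apply pl_idem). subst z.
  assert (t = st y) by (rewrite <- (proj2 R1), comm0, (proj2 R2); auto; apply st_idem). subst t.
  subst w. unfold phi; simpl. rewrite pl_l, st_r. auto. Qed.

Lemma U_trans : adequate_transversal W mW U.
Proof. split; [exact U_star|]. split; [exact U_adequate|].
  intros [e x] Hw. exists (phi x). split; [apply bar_intro; auto|].
  intros xb' H'. apply (bar_elim _ _ Hw H'). Qed.

Lemma U_admissible : admissible W mW U.
Proof. intros [e x] [f y] xb yb Hx Hy Bx By.
  rewrite (bar_elim _ _ Hx Bx), (bar_elim _ _ Hy By); simpl.
  rewrite <- phi_hom, mW_pair. apply bar_intro. rewrite <- mW_pair; apply W_closed; auto. Qed.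

Lemma U_iso : iso_onto mul0 U mW.
Proof. exists phi. split; [exact phi_U|]. split; [exact phi_inj|]. split; [exact phi_surj|].
  exact phi_hom. Qed.

Definition fa (a : TI) : T0 := proj1_sig (constructive_indefinite_description _ (HLu a)).
Lemma fa_idem a : idem mul0 (fa a).
Proof. unfold fa; destruct (constructive_indefinite_description _ _) as [e He]; apply He. Qed.
Lemma fa_LL a : LL a (fa a).
Proof. unfold fa; destruct (constructive_indefinite_description _ _) as [e [Ie He]]; simpl.
  unfold LL, Pl. rewrite (pl_idemp e Ie). apply Lg_iff; auto. Qed.
Lemma LL_uniq a f g : idem mul0 f -> idem mul0 g -> LL a f -> LL a g -> f = g.
Proof. intros If Ig [E1 E2] [F1 F2]. unfold Pl in *. rewrite pl_idemp in E1, E2 by auto.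
  rewrite pl_idemp in F1, F2 by auto.
  assert (G1 : iota f <.> iota g = iota f) by (rewrite <- E2, AI', F1; auto).
  assert (G2 : iota g <.> iota f = iota g) by (rewrite <- F2, AI', E1; auto).
  rewrite <- Hio in G1, G2 by auto. apply Hinj; auto.
  rewrite <- G1, <- G2, comm0; auto. Qed.

Lemma Iset_iff k : I_set W mW U k <-> W k /\ idem mW k.
Proof. split.
  - intros [x [xb [f [Hx [_ [HE [_ [IE _]]]]]]]]. auto.
  - destruct k as [a f]. intros [Hk Ik]. pose proof (W_idem_snd _ Hk Ik) as If; simpl in If.
    assert (Hk' := Hk). apply W_iff in Hk'; simpl in Hk'.
    exists (a, f), (phi f), (phi f). split; auto.
    split; [apply phi_U|]. split; auto. split; [apply phi_W|]. split; auto.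
    split; [apply W_idem; [apply phi_W|auto]|].
    split; [|split].
    + unfold phi. rewrite !mW_pair; repeat (rewrite ?C1', ?If, ?(proj1 Hk')); auto.
    + exists (phi (pl f)). split; [apply plU, pl_spec|]. rewrite (pl_idemp f If).
      unfold phi. apply SameL; auto. split; apply II.
    + exists (phi (st f)). split; [apply stU, st_spec|]. rewrite (st_idemp f If).
      exists None, None; simpl; auto. Qed.

Lemma I_iso : condition3 mul0 mulI iota act -> iso_onto mulI (I_set W mW U) mW.
Proof. intro H3. exists (fun a => (a, fa a)).
  assert (Wa : forall a, W (a, fa a)) by (intro a; apply W_iff, fa_LL).
  split; [intro a; apply Iset_iff; split; auto; apply W_idem; auto; apply fa_idem|].
  split; [intros a a' E; inversion E; auto|].
  split.
  - intros [a f] Hk. apply Iset_iff in Hk. destruct Hk as [Hk Ik].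
    pose proof (W_idem_snd _ Hk Ik) as If; simpl in If. apply W_iff in Hk; simpl in Hk.
    exists a. f_equal. apply (LL_uniq a); auto; [apply fa_idem | apply fa_LL].
  - intros a b. rewrite mW_pair.
    assert (E : act (fa a) b = iota (fa a) <.> b).
    { apply (H3 b (fa a) (fa a)). split; [exact I|split; [apply fa_idem|apply Rstar_refl]]. }
    assert (E2 : a <.> act (fa a) b = a <.> b).
    { rewrite E, <- AI'. f_equal. pose proof (fa_LL a) as [F1 _]. unfold Pl in F1.
      rewrite (pl_idemp _ (fa_idem a)) in F1. exact F1. }
    rewrite E2. f_equal. apply (LL_uniq (a <.> b)); [apply fa_idem | apply idem_mul0; apply fa_idem | apply fa_LL |].
    rewrite <- E2. apply LL_mul; apply fa_LL. Qed.

Lemma P1_main : closed_on (Wpred mul0 mulI iota) (mulW mul0 mulI act) /\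
     assoc_on (Wpred mul0 mulI iota) (mulW mul0 mulI act) /\
     left_adequate (Wpred mul0 mulI iota) (mulW mul0 mulI act) /\
     quasi_adequate (Wpred mul0 mulI iota) (mulW mul0 mulI act) /\
     exists U : TI * T0 -> Prop,
       adequate_transversal (Wpred mul0 mulI iota) (mulW mul0 mulI act) U /\
       admissible (Wpred mul0 mulI iota) (mulW mul0 mulI act) U /\
       left_ample U (mulW mul0 mulI act) /\
       iso_onto mul0 U (mulW mul0 mulI act) /\
       (condition3 mul0 mulI iota act -> iso_onto mulI (I_set (Wpred mul0 mulI iota) (mulW mul0 mulI act) U) (mulW mul0 mulI act)).
Proof. split; [exact W_closed|]. split; [exact W_assoc|]. split; [exact W_ladeq|]. split; [exact W_quasi|].
  exists U. split; [exact U_trans|]. split; [exact U_admissible|]. split; [exact U_lample|].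
  split; [exact U_iso|]. exact I_iso. Qed.
End P1.


Section P2.
Variables (T : Type) (mul : T -> T -> T) (U : T -> Prop).
Hypothesis HA : assoc_on allT mul.
Hypothesis HLA : left_adequate allT mul.
Hypothesis HQA : quasi_adequate allT mul.
Hypothesis HT : adequate_transversal allT mul U.
Hypothesis HLU : left_ample U mul.
Hypothesis HAd : admissible allT mul U.

Local Notation "x ** y" := (mul x y) (at level 40, left associativity).
Lemma A' x y z : x ** y ** z = x ** (y ** z).
Proof. apply HA; exact I. Qed.

Definition pS (x : T) : T := proj1_sig (constructive_indefinite_description _ (proj1 (proj1 HLA x I))).
Lemma pS_spec x : idem mul (pS x) /\ Rstar allT mul x (pS x).
Proof. unfold pS; destruct (constructive_indefinite_description _ _) as [p Hp]; exact (proj2 Hp). Qed.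
Lemma pS_idem x : idem mul (pS x). Proof. apply pS_spec. Qed.
Lemma pS_R x : Rstar allT mul x (pS x). Proof. apply pS_spec. Qed.
Lemma pS_l x : pS x ** x = x.
Proof. apply (Rstar_idem (pS_R x) I (pS_idem x)). Qed.
Lemma pS_uniq x e : idem mul e -> Rstar allT mul x e -> e = pS x.
Proof. intros Ie Re. apply (proj2 HLA x e (pS x) I I I Ie (pS_idem x) Re (pS_R x)). Qed.
Lemma pS_idemp e : idem mul e -> pS e = e.
Proof. intro Ie; symmetry; apply pS_uniq; auto; apply Rstar_refl. Qed.
Lemma band e f : idem mul e -> idem mul f -> idem mul (e ** f).
Proof. intros; apply (proj2 HQA); auto; exact I. Qed.
Lemma idem_l e z : idem mul e -> e ** (e ** z) = e ** z.
Proof. intro Ie; rewrite <- A', Ie; auto. Qed.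
Lemma lrb e f : idem mul e -> idem mul f -> e ** f ** e = e ** f.
Proof. intros Ie If.
  assert (I1 := band e f Ie If). assert (I2 := band (e ** f) e I1 Ie).
  symmetry. apply (proj2 HLA (e ** f) (e ** f) (e ** f ** e) I I I I1 I2 (Rstar_refl _ _ _)).
  apply R_Rstar; auto; try exact I.
  - transitivity ((e ** f) ** (e ** f)); [rewrite !A', (idem_l e f Ie); auto | exact I1].
  - transitivity ((e ** f) ** (e ** f) ** e); [rewrite !A'; auto | rewrite I1; auto]. Qed.

Lemma Rcompat x a b : Rstar allT mul a b -> Rstar allT mul (x ** a) (x ** b).
Proof. intros H u v _ _.
  rewrite !(lmul1_assoc HA u x); try exact I; try (destruct u; exact I).
  rewrite !(lmul1_assoc HA v x); try exact I; try (destruct v; exact I).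
  apply (H (Some (lmul1 mul u x)) (Some (lmul1 mul v x)) I I). Qed.
Lemma pS_left x a : pS (x ** a) = pS (x ** pS a).
Proof. apply pS_uniq; [apply pS_idem|].
  apply (Rstar_trans (Rstar_sym (Rcompat x _ _ (pS_R a)))). apply pS_R. Qed.
Lemma pS_idem_left g y : idem mul g -> pS (g ** y) = g ** pS y.
Proof. intro Ig. symmetry; apply pS_uniq; [apply band; auto; apply pS_idem|].
  apply (Rcompat g _ _ (pS_R y)). Qed.
Lemma pS_mul_left x y : pS x ** pS (x ** y) = pS (x ** y).
Proof. apply (Rstar_left (pS x) (pS_R (x ** y)) I). rewrite <- A', pS_l; auto. Qed.

Definition HS := proj1 HT.
Definition Uadeq := proj1 (proj2 HT).
Lemma Uclosed : closed_on U mul. Proof. apply HS. Qed.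
Lemma Uabund : abundant U mul. Proof. apply HS. Qed.
Lemma U_Rstar a b : U a -> U b -> (Rstar U mul a b <-> Rstar allT mul a b).
Proof. intros Ha Hb; apply (proj2 (proj2 (proj2 HS)) a b Ha Hb). Qed.
Lemma U_Lstar a b : U a -> U b -> (Lstar U mul a b <-> Lstar allT mul a b).
Proof. intros Ha Hb; apply (proj2 (proj2 (proj2 HS)) a b Ha Hb). Qed.
Lemma Ucomm e f : U e -> U f -> idem mul e -> idem mul f -> e ** f = f ** e.
Proof. intros; apply (proj2 Uadeq); auto. Qed.
Lemma Uplus_ex u : U u -> exists p, is_plus U mul u p.
Proof. intro Hu. destruct (Uabund u Hu) as [[p Hp] _]. exists p; exact Hp. Qed.
Lemma Ustar_ex u : U u -> exists p, is_star U mul u p.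
Proof. intro Hu. destruct (Uabund u Hu) as [_ [p Hp]]. exists p; exact Hp. Qed.
Lemma Uplus_pS u p : U u -> is_plus U mul u p -> p = pS u.
Proof. intros Hu [Up [Ip Rp]]. apply pS_uniq; auto. apply U_Rstar; auto. Qed.
Lemma Uplus_l u p : is_plus U mul u p -> p ** u = u.
Proof. intros [Up [Ip Rp]]. apply (Rstar_idem Rp Up Ip). Qed.
Lemma Ustar_r u q : is_star U mul u q -> u ** q = u.
Proof. intros [Uq [Iq Lq]]. apply (Lstar_idem Lq Uq Iq). Qed.
Lemma Uplus_idem e : U e -> idem mul e -> is_plus U mul e e.
Proof. intros; split; auto; split; auto; apply Rstar_refl. Qed.

Definition bar (x : T) : T := proj1_sig (constructive_indefinite_description _ (proj2 (proj2 HT) x I)).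
Lemma bar_spec x : is_bar allT mul U x (bar x).
Proof. unfold bar; destruct (constructive_indefinite_description _ _) as [b Hb]; exact (proj1 Hb). Qed.
Lemma bar_uniq x xb : is_bar allT mul U x xb -> xb = bar x.
Proof. unfold bar; destruct (constructive_indefinite_description _ _) as [b Hb]; simpl. apply (proj2 Hb). Qed.

Lemma tdec x xb e f : tdecomp allT mul U x xb e f ->
  e = pS x /\ x = e ** xb /\ exists p, is_plus U mul xb p /\ e ** p = e /\ p ** e = p.
Proof. intros [Uxb [_ [_ [Ie [If [Ex [[p [Hp Lp]] [q [Hq Rq]]]]]]]]].
  destruct (Lgreen_idems HA I I Ie (proj1 (proj2 Hp)) Lp) as [L1 L2].
  destruct (Rgreen_idems HA I I If (proj1 (proj2 Hq)) Rq) as [R1 R2].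
  assert (Iq := proj1 (proj2 Hq)).
  assert (Efq : f = q).
  { rewrite <- R1. rewrite <- (lrb q f Iq If). rewrite A', R2. exact Iq. }
  subst f. rewrite A', (Ustar_r _ _ Hq) in Ex.
  assert (Upl := proj1 Hp).
  assert (HR : Rstar allT mul xb p) by (apply U_Rstar; auto; apply Hp).
  assert (Re : Rstar allT mul x e).
  { intros u v Hu Hv. rewrite Ex, !(lmul1_assoc HA _ e xb); try exact I; try (destruct u; exact I); try (destruct v; exact I).
    split; intro E.
    - pose proof (Rstar_eq (lmul1 mul u e) (lmul1 mul v e) HR I I E) as E'.
      rewrite <- !(lmul1_assoc HA) in E'; try exact I; try (destruct u; exact I); try (destruct v; exact I).
      rewrite L1 in E'. exact E'.
    - rewrite E; auto. }
  split; [apply pS_uniq; auto|]. split; auto. exists p. auto. Qed.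

Lemma bar_tdec x : exists e f, tdecomp allT mul U x (bar x) e f.
Proof. exact (bar_spec x). Qed.
Lemma Ubar x : U (bar x).
Proof. destruct (bar_spec x) as [e [f H]]. apply H. Qed.
Lemma x_eq x : x = pS x ** bar x.
Proof. destruct (bar_spec x) as [e [f H]]. destruct (tdec _ _ _ _ H) as [-> [E _]]. exact E. Qed.
Lemma pS_bar x : exists p, is_plus U mul (bar x) p /\ pS x ** p = pS x /\ p ** pS x = p.
Proof. destruct (bar_spec x) as [e [f H]]. destruct (tdec _ _ _ _ H) as [-> [_ E]]. exact E. Qed.

Lemma bar_U u : U u -> bar u = u.
Proof. intro Hu. symmetry. apply bar_uniq.
  destruct (Uplus_ex u Hu) as [p Hp]; destruct (Ustar_ex u Hu) as [q Hq].
  exists p, q. split; auto. split; [exact I|]. split; [exact I|].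
  split; [apply Hp|]. split; [apply Hq|]. split.
  - rewrite (Uplus_l _ _ Hp), (Ustar_r _ _ Hq); auto.
  - split; [exists p; split; auto; exists None, None; simpl; auto|].
    exists q; split; auto; exists None, None; simpl; auto. Qed.
Lemma bar_mul x y : bar (x ** y) = bar x ** bar y.
Proof. symmetry; apply bar_uniq. apply HAd; try exact I; apply bar_spec. Qed.
Lemma bar_idem e : idem mul e -> idem mul (bar e).
Proof. intro Ie. unfold idem. rewrite <- bar_mul, Ie; auto. Qed.
Lemma bar_e e : idem mul e -> e ** bar e = e /\ bar e ** e = bar e.
Proof. intro Ie. destruct (pS_bar e) as [p [Hp [E1 E2]]].
  rewrite (plus_unique Uadeq Hp (Uplus_idem _ (Ubar e) (bar_idem e Ie))) in E1, E2.
  rewrite (pS_idemp e Ie) in E1, E2. auto. Qed.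

Lemma K_ample x e : U x -> idem mul e -> x ** e = pS (x ** e) ** x.
Proof. intros Ux Ie. set (eb := bar e).
  assert (Ueb : U eb) by apply Ubar. assert (Ieb : idem mul eb) by (apply bar_idem; auto).
  assert (Uxe : U (x ** eb)) by (apply Uclosed; auto).
  destruct (Uplus_ex _ Uxe) as [g Hg].
  assert (Eg : x ** eb = g ** x) by (apply (proj2 HLU x eb g Ux Ueb Ieb Hg)).
  set (h := pS (x ** e)).
  destruct (pS_bar (x ** e)) as [p' [Hp' [E1 E2]]].
  rewrite bar_mul, (bar_U x Ux) in Hp'. fold eb in Hp'.
  rewrite (plus_unique Uadeq Hp' Hg) in E1. fold h in E1.
  assert (Hhx : h ** x = h ** x ** eb) by (rewrite A', Eg, <- A', E1; auto).
  transitivity (h ** x ** e); [unfold h; rewrite A', pS_l; auto|].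
  rewrite Hhx. rewrite (A' (h ** x) eb e). unfold eb. rewrite (proj2 (bar_e e Ie)). reflexivity. Qed.

Lemma distrib x e f : U x -> idem mul e -> idem mul f ->
  pS (x ** (e ** f)) = pS (x ** e) ** pS (x ** f).
Proof. intros Ux Ie If. rewrite <- A'. rewrite (K_ample x e Ux Ie) at 1. rewrite A'. apply pS_idem_left, pS_idem. Qed.

Lemma sig_eq {A : Type} {Pr : A -> Prop} (a b : {x | Pr x}) : proj1_sig a = proj1_sig b -> a = b.
Proof. destruct a as [a Ha], b as [b Hb]; simpl; intros ->; f_equal; apply proof_irrelevance. Qed.

Definition T0 := {x : T | U x}.
Definition mul0 (a b : T0) : T0 :=
  exist _ (proj1_sig a ** proj1_sig b) (Uclosed _ _ (proj2_sig a) (proj2_sig b)).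
Definition TI := {e : T | idem mul e}.
Definition mulI (a b : TI) : TI :=
  exist _ (proj1_sig a ** proj1_sig b) (band _ _ (proj2_sig a) (proj2_sig b)).
Definition iota (x : T0) : TI := exist _ (pS (proj1_sig x)) (pS_idem _).
Definition act (x : T0) (e : TI) : TI := exist _ (pS (proj1_sig x ** proj1_sig e)) (pS_idem _).

Lemma idem0 a : idem mul0 a <-> idem mul (proj1_sig a).
Proof. unfold idem; split; intro H.
  - apply (f_equal (@proj1_sig _ _)) in H; exact H.
  - apply sig_eq; exact H. Qed.

Lemma v_inj (a b : T0) : proj1_sig a = proj1_sig b -> a = b. Proof. apply sig_eq. Qed.
Lemma v_surj b : U b -> exists a : T0, proj1_sig a = b.
Proof. intro Hb; exists (exist _ b Hb); reflexivity. Qed.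
Lemma v_hom a b : proj1_sig (mul0 a b) = proj1_sig a ** proj1_sig b. Proof. reflexivity. Qed.
Lemma v_U (a : T0) : U (proj1_sig a). Proof. apply proj2_sig. Qed.

Definition plus0 := plus_tr mul0 U mul (@proj1_sig _ _) v_U v_inj v_surj v_hom.
Definition star0 := star_tr mul0 U mul (@proj1_sig _ _) v_U v_inj v_surj v_hom.

Lemma plus0_pS y p : is_plus allT mul0 y p -> proj1_sig p = pS (proj1_sig y).
Proof. intro H. apply plus0 in H. apply Uplus_pS; auto. apply v_U. Qed.

Lemma cd_assoc0 : assoc_on allT mul0.
Proof. intros a b c _ _ _; apply sig_eq; simpl; apply A'. Qed.
Lemma cd_lample : left_ample allT mul0.
Proof. apply (left_ample_tr mul0 U mul (@proj1_sig _ _) v_U v_inj v_surj v_hom). exact HLU. Qed.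
Lemma cd_lrb : left_regular_band mulI.
Proof. split; [|split].
  - intros a b c _ _ _; apply sig_eq; simpl; apply A'.
  - intro a; apply sig_eq; simpl; apply (proj2_sig a).
  - intros a b; apply sig_eq; simpl; apply lrb; apply proj2_sig. Qed.
Lemma cd_hom e f : idem mul0 e -> idem mul0 f -> iota (mul0 e f) = mulI (iota e) (iota f).
Proof. intros Ie If; rewrite idem0 in Ie, If. apply sig_eq; simpl.
  rewrite !pS_idemp; auto. apply band; auto. Qed.
Lemma cd_inj e f : idem mul0 e -> idem mul0 f -> iota e = iota f -> e = f.
Proof. intros Ie If E; rewrite idem0 in Ie, If. apply (f_equal (@proj1_sig _ _)) in E; simpl in E.
  rewrite !pS_idemp in E; auto. apply sig_eq; auto. Qed.

Definition barI (a : TI) : T0 := exist _ (bar (proj1_sig a)) (Ubar _).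
Lemma barI_idem a : idem mul0 (barI a).
Proof. apply idem0; simpl; apply bar_idem, proj2_sig. Qed.
Lemma iota_barI a : proj1_sig (iota (barI a)) = bar (proj1_sig a).
Proof. simpl. apply pS_idemp, bar_idem, proj2_sig. Qed.

Lemma pS_barI (a : TI) : pS (bar (proj1_sig a)) = bar (proj1_sig a).
Proof. apply pS_idemp, bar_idem, proj2_sig. Qed.
Lemma cd_inv a : exists e, idem mul0 e /\ inverse_of mulI a (iota e) /\
      forall e', idem mul0 e' -> inverse_of mulI a (iota e') -> e' = e.
Proof. exists (barI a). destruct (bar_e _ (proj2_sig a)) as [E1 E2].
  split; [apply barI_idem|]. split.
  - split; apply sig_eq; simpl; rewrite ?iota_barI, ?pS_barI.
    + rewrite E1; apply (proj2_sig a).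
    + rewrite E2; apply bar_idem, proj2_sig.
  - intros e' Ie' [F1 F2]. apply (f_equal (@proj1_sig _ _)) in F1, F2. simpl in F1, F2.
    rewrite idem0 in Ie'. rewrite (pS_idemp _ Ie') in F1, F2.
    set (g := proj1_sig e') in *. set (a0 := proj1_sig a) in *.
    assert (Ia : idem mul a0) by apply (proj2_sig a).
    rewrite (lrb _ _ Ia Ie') in F1. rewrite (lrb _ _ Ie' Ia) in F2.
    apply sig_eq. simpl. fold g.
    assert (G1 : g ** bar a0 = g) by (rewrite <- F2 at 1; rewrite A', E1; exact F2).
    assert (G2 : bar a0 ** g = bar a0) by (rewrite <- E2 at 1; rewrite A', F1; exact E2).
    change (g = bar a0). rewrite <- G1 at 1. rewrite <- G2 at 2. apply Ucomm; auto; try apply Ubar; try apply bar_idem; auto.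
    apply v_U. Qed.
Lemma cd_L a : exists e, idem mul0 e /\ Lgreen allT mulI a (iota e).
Proof. exists (barI a). split; [apply barI_idem|]. destruct (bar_e _ (proj2_sig a)) as [E1 E2].
  exists (Some a), (Some (iota (barI a))); simpl. split; [exact I|]. split; [exact I|].
  split; apply sig_eq; simpl; rewrite ?iota_barI, ?pS_barI; auto. Qed.
Lemma cd_act x y e : act (mul0 x y) e = act x (act y e).
Proof. apply sig_eq; simpl. rewrite A'. apply pS_left. Qed.
Lemma cd_dist x e f : act x (mulI e f) = mulI (act x e) (act x f).
Proof. apply sig_eq; simpl. apply distrib; [apply v_U | apply proj2_sig | apply proj2_sig]. Qed.
Lemma cd_C1 x y p q : is_plus allT mul0 y p -> is_plus allT mul0 (mul0 x y) q ->
      act x (iota p) = iota q.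
Proof. intros Hp Hq. apply plus0_pS in Hp; apply plus0_pS in Hq. apply sig_eq; simpl.
  rewrite Hp, Hq. simpl. rewrite (pS_idemp (pS (proj1_sig y)) (pS_idem _)),
    (pS_idemp (pS (proj1_sig x ** proj1_sig y)) (pS_idem _)). symmetry; apply pS_left. Qed.
Lemma cd_C2 x x1 x2 e1 e2 p p1 p2 s :
      is_plus allT mul0 x p -> is_star allT mul0 x s ->
      is_plus allT mul0 x1 p1 -> is_plus allT mul0 x2 p2 ->
      Lgreen allT mulI e1 (iota p1) -> Lgreen allT mulI e2 (iota p2) ->
      mulI (iota p) (act x e1) = mulI (iota p) (act x e2) ->
      mul0 x x1 = mul0 x x2 ->
      act s e1 = act s e2 /\ mul0 s x1 = mul0 s x2.
Proof. intros Hp Hs _ _ _ _ E Ex. apply plus0_pS in Hp. apply star0 in Hs.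
  assert (Ls : Lstar allT mul (proj1_sig x) (proj1_sig s)) by (apply U_Lstar; try apply v_U; apply Hs).
  apply (f_equal (@proj1_sig _ _)) in E, Ex; simpl in E, Ex.
  rewrite Hp, (pS_idemp _ (pS_idem _)), !pS_mul_left in E.
  assert (E' : proj1_sig x ** proj1_sig e1 = proj1_sig x ** proj1_sig e2).
  { rewrite (K_ample _ _ (v_U x) (proj2_sig e1)), (K_ample _ _ (v_U x) (proj2_sig e2)), E; auto. }
  split; apply sig_eq; simpl.
  - f_equal. apply (Lstar_eq _ _ Ls I I E').
  - apply (Lstar_eq _ _ Ls I I Ex). Qed.

Lemma cdata : construction_data mul0 mulI iota act.
Proof. split; [exact cd_assoc0|]. split; [exact cd_lample|]. split; [exact cd_lrb|].
  split; [exact cd_hom|]. split; [exact cd_inj|]. split; [exact cd_inv|]. split; [exact cd_L|].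
  split; [exact cd_act|]. split; [exact cd_dist|]. split; [exact cd_C1|]. exact cd_C2. Qed.

Definition Phi (s : T) : TI * T0 := (exist _ (pS s) (pS_idem s), exist _ (bar s) (Ubar s)).

Lemma tdec_intro t xb e p q : U xb -> idem mul e -> is_plus U mul xb p -> is_star U mul xb q ->
  e ** p = e -> p ** e = p -> t = e ** xb -> tdecomp allT mul U t xb e q.
Proof. intros Uxb Ie Hp Hq E1 E2 Et.
  split; auto. split; [exact I|]. split; [exact I|]. split; auto. split; [apply Hq|].
  split; [rewrite Et, A', (Ustar_r _ _ Hq); auto|]. split.
  - exists p; split; auto. apply L_Lgreen; auto; exact I.
  - exists q; split; auto. exists None, None; simpl; auto. Qed.

Lemma Wpred_Phi s : Wpred mul0 mulI iota (Phi s).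
Proof. destruct (pS_bar s) as [p0 [Hp [E1 E2]]].
  exists (exist _ p0 (proj1 Hp)). split.
  - apply plus0. simpl. exact Hp.
  - simpl. assert (Ip : idem mul p0) by apply Hp.
    exists (Some (exist _ (pS s) (pS_idem s))), (Some (iota (exist _ p0 (proj1 Hp)))); simpl.
    split; [exact I|]. split; [exact I|]. split; apply sig_eq; simpl; rewrite (pS_idemp p0 Ip); auto. Qed.

Lemma Phi_inj s t : Phi s = Phi t -> s = t.
Proof. intro E. inversion E as [[E1 E2]]. rewrite (x_eq s), (x_eq t), E1, E2; auto. Qed.

Lemma Phi_surj w : Wpred mul0 mulI iota w -> exists s, Phi s = w.
Proof. destruct w as [e x]. intros [p [Hp Lp]]; simpl in *.
  assert (Ep := plus0_pS _ _ Hp). apply plus0 in Hp.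
  assert (Ip : idem mul (proj1_sig p)) by apply Hp.
  destruct (Lgreen_idems (proj1 cd_lrb) I I (proj1 (proj2 cd_lrb) e) (proj1 (proj2 cd_lrb) _) Lp) as [L1 L2].
  apply (f_equal (@proj1_sig _ _)) in L1, L2; simpl in L1, L2.
  rewrite (pS_idemp _ Ip) in L1, L2.
  destruct (Ustar_ex _ (v_U x)) as [q Hq].
  assert (Htd : tdecomp allT mul U (proj1_sig e ** proj1_sig x) (proj1_sig x) (proj1_sig e) q).
  { apply (tdec_intro _ _ _ (proj1_sig p)); auto; try apply v_U; apply proj2_sig. }
  exists (proj1_sig e ** proj1_sig x).
  assert (Eb : proj1_sig x = bar (proj1_sig e ** proj1_sig x)) by (apply bar_uniq; exists (proj1_sig e), q; exact Htd).
  destruct (tdec _ _ _ _ Htd) as [Ee _].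
  unfold Phi. f_equal; apply sig_eq; simpl; auto. Qed.

Lemma Phi_hom s t : Phi (s ** t) = mulW mul0 mulI act (Phi s) (Phi t).
Proof. unfold Phi, mulW; simpl. f_equal; apply sig_eq; simpl.
  - rewrite (x_eq s) at 1. rewrite A', (pS_idem_left _ _ (pS_idem s)). f_equal. apply pS_left.
  - apply bar_mul. Qed.

Lemma P2_main : exists (T0 : Type) (mul0 : T0 -> T0 -> T0) (TI : Type) (mulI : TI -> TI -> TI)
            (iota : T0 -> TI) (act : T0 -> TI -> TI),
       construction_data mul0 mulI iota act /\
       iso_onto mul (Wpred mul0 mulI iota) (mulW mul0 mulI act).
Proof. exists T0, mul0, TI, mulI, iota, act. split; [exact cdata|].
  exists Phi. split; [exact Wpred_Phi|]. split; [exact Phi_inj|]. split; [exact Phi_surj|].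
  exact Phi_hom. Qed.
End P2.

Theorem theorem3p4 :
  (forall (T0 : Type) (mul0 : T0 -> T0 -> T0) (TI : Type) (mulI : TI -> TI -> TI)
          (iota : T0 -> TI) (act : T0 -> TI -> TI),
     construction_data mul0 mulI iota act ->
     let P := Wpred mul0 mulI iota in
     let m := mulW mul0 mulI act in
     closed_on P m /\ assoc_on P m /\ left_adequate P m /\ quasi_adequate P m /\
     exists U : TI * T0 -> Prop,
       adequate_transversal P m U /\ admissible P m U /\ left_ample U m /\
       iso_onto mul0 U m /\
       (condition3 mul0 mulI iota act -> iso_onto mulI (I_set P m U) m)) /\
  (forall (T : Type) (mul : T -> T -> T) (U : T -> Prop),
     assoc_on allT mul -> left_adequate allT mul -> quasi_adequate allT mul ->
     adequate_transversal allT mul U -> left_ample U mul -> admissible allT mul U ->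
     exists (T0 : Type) (mul0 : T0 -> T0 -> T0) (TI : Type) (mulI : TI -> TI -> TI)
            (iota : T0 -> TI) (act : T0 -> TI -> TI),
       construction_data mul0 mulI iota act /\
       iso_onto mul (Wpred mul0 mulI iota) (mulW mul0 mulI act)).
Proof.
  split.
  - intros T0 mul0 TI mulI iota act H P m.
    destruct H as [A0 [LA [[AI [II LRB]] [Hio [Hinj [Hinv [HLu [Hact [Hdist [C1 C2]]]]]]]]]].
    unfold P, m. apply P1_main; assumption.
  - intros T mul U HA HLA HQA HT HLU HAd. apply (P2_main T mul U); assumption.
Qed.
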